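(* Let $\mathbf x\in\Omega$ and $\mathbf u=g(\mathbf x)$. (i) If $(X_j)_{j\ge1}$ is the $M$-decomposition of $\mathbf x$, then the $M'$-decomposition of $g(\mathbf x)$ is $(g_0(X_j))_{j\ge1}$. (ii) If $(U_j)_{j\ge1}$ is the $M'$-decomposition of $\mathbf u\in\Omega$ and $h(\mathbf u)=\prod_{j\ge1}g_0^{-1}(U_j)$, then the $M$-decomposition of $h(\mathbf u)$ is $(g_0^{-1}(U_j))_{j\ge1}$. (iii) The map $g:\Omega\to\Omega$ is a bijection.
   Context: Let $\Sigma=\{1,\dots,N\}$ with $N\ge4$, and let $\tau,\kappa,\alpha,\gamma\in\Sigma$ be distinct except that $\tau=\alpha$ is allowed. $\Sigma^*$ denotes finite words, $a^k$ the word of $k$ copies of $a$, and $\Omega=\{\omega\kappa^\infty:\omega\in\Sigma^*\}$. Let $\mathcal C_M=\{\tau\gamma^k:k\ge2\}\cup\{\kappa\alpha^k\kappa\gamma:k\ge0\}$ and $\mathcal C_{M'}=\{\kappa\alpha^k\kappa\gamma:k\ge0\}\cup\{\kappa\alpha^k\kappa\gamma\gamma:k\ge0\}\cup\{\tau\gamma\gamma\}$; letters of $\Sigma$ are regarded as one-letter words. The $M$-decomposition of $\mathbf x\in\Omega$ is $\mathbf x=X_1X_2\cdots$ where $X_1$ is the longest prefix of $\mathbf x$ in $\mathcal C_M\cup\Sigma$, and inductively $X_k$ is the longest prefix of $X_kX_{k+1}\cdots$ (the remaining tail) lying in $\mathcal C_M\cup\Sigma$. The $M'$-decomposition is defined the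 same way using $\mathcal C_{M'}\cup\Sigma$. Define the bijection $g_0:\mathcal C_M\cup\Sigma\to\mathcal C_{M'}\cup\Sigma$ by $\tau\gamma^k\mapsto\kappa\alpha^{k-2}\kappa\gamma$ ($k\ge2$), $\kappa\alpha^k\kappa\gamma\mapsto\kappa\alpha^{k-1}\kappa\gamma\gamma$ ($k\ge1$), $\kappa\kappa\gamma\mapsto\tau\gamma\gamma$, $i\mapsto i$ ($i\in\Sigma$). Define $g:\Omega\to\Omega$ by $g(\mathbf x)=\prod_{j\ge1}g_0(X_j)$ (concatenation), where $(X_j)$ is the $M$-decomposition of $\mathbf x$. *)

(* Defs.v *)
From mathcomp Require Import all_boot.
From Stdlib Require Import ClassicalEpsilon.
Set Implicit Arguments. Unset Strict Implicit. Unset Printing Implicit Defensive.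

Section Defs.
Variables (N tau kappa alpha gamma : nat).

Definition inSigma (a : nat) : bool := (1 <= a <= N).

Definition inOmega (x : nat -> nat) : Prop :=
  (forall n, inSigma (x n)) /\ exists n0, forall m, n0 <= m -> x m = kappa.

Definition isLetter (w : seq nat) : bool := (size w == 1) && all inSigma w.

Definition isTauGam (w : seq nat) : bool :=
  if w is a :: t then (a == tau) && (2 <= size t) && all (pred1 gamma) t else false.

Definition isKAKG (w : seq nat) : bool :=
  (3 <= size w) && (w == kappa :: nseq (size w - 3) alpha ++ [:: kappa; gamma]).

Definition isKAKGG (w : seq nat) : bool :=
  (4 <= size w) && (w == kappa :: nseq (size w - 4) alpha ++ [:: kappa; gamma; gamma]).

Definition inCMS (w : seq nat) : bool := isTauGam w || isKAKG w || isLetter w.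
Definition inCM'S (w : seq nat) : bool :=
  isKAKG w || isKAKGG w || (w == [:: tau; gamma; gamma]) || isLetter w.

(* g_0 : C_M u Sigma -> C_M' u Sigma (identity outside its domain) *)
Definition g0 (w : seq nat) : seq nat :=
  if isTauGam w then kappa :: nseq (size w - 3) alpha ++ [:: kappa; gamma]
  else if isKAKG w then
    (if 1 <= size w - 3 then kappa :: nseq (size w - 4) alpha ++ [:: kappa; gamma; gamma]
     else [:: tau; gamma; gamma])
  else w.

(* g_0^{-1} : C_M' u Sigma -> C_M u Sigma (identity outside its domain) *)
Definition g0inv (w : seq nat) : seq nat :=
  if isKAKG w then tau :: nseq (size w - 3).+2 gamma
  else if isKAKGG w then kappa :: nseq (size w - 4).+1 alpha ++ [:: kappa; gamma]
  else if w == [:: tau; gamma; gamma] then [:: kappa; kappa; gamma]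
  else w.

End Defs.

Definition pos (X : nat -> seq nat) (j : nat) : nat := \sum_(i < j) size (X i).

Definition isDecomp (P : seq nat -> bool) (x : nat -> nat) (X : nat -> seq nat) : Prop :=
  forall j,
    P (X j) /\
    (forall i, i < size (X j) -> nth 0 (X j) i = x (pos X j + i)) /\
    (forall w, P w -> (forall i, i < size w -> nth 0 w i = x (pos X j + i)) ->
       size w <= size (X j)).

(* infinite concatenation X_1 X_2 ... of nonempty finite words *)
Fixpoint cat_aux (fuel : nat) (X : nat -> seq nat) (j n : nat) : nat :=
  match fuel with
  | 0 => 0
  | fuel'.+1 => if n < size (X j) then nth 0 (X j) n
                else cat_aux fuel' X j.+1 (n - size (X j))
  end.
Definition infconcat (X : nat -> seq nat) : nat -> nat := fun n => cat_aux n.+1 X 0 n.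

Definition decomp (P : seq nat -> bool) (x : nat -> nat) : nat -> seq nat :=
  epsilon (inhabits (fun _ => [::])) (fun X => isDecomp P x X).

Definition g (N tau kappa alpha gamma : nat) (x : nat -> nat) : nat -> nat :=
  infconcat (fun j => g0 tau kappa alpha gamma (decomp (inCMS N tau kappa alpha gamma) x j)).

(* Main.v *)
Require Import Defs.
From mathcomp Require Import all_boot zify.
From Stdlib Require Import ClassicalEpsilon FunctionalExtensionality.
Set Implicit Arguments. Unset Strict Implicit. Unset Printing Implicit Defensive.

Definition shift (X : nat -> seq nat) k := fun i => X (k + i).
Definition pre (w : seq nat) (t : nat -> nat) := forall i, i < size w -> nth 0 w i = t i.

Lemma cat_aux_shift f X j k n : cat_aux f X (j + k) n = cat_aux f (shift X j) k n.
Proof.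
elim: f k n => [|f IH] k n //=.
rewrite /shift; case: ifP => // _. by rewrite -addnS IH.
Qed.

Lemma cat_aux_fuel X : (forall j, 0 < size (X j)) ->
  forall f f' j n, n < f -> n < f' -> cat_aux f X j n = cat_aux f' X j n.
Proof.
move=> ne; elim=> [|f IH] [|f'] j n //= h1 h2.
case: ifP => // h. apply: IH; have := ne j; lia.
Qed.

Lemma conc_lt Z n : n < size (Z 0) -> infconcat Z n = nth 0 (Z 0) n.
Proof. by rewrite /infconcat /= => ->. Qed.

Lemma conc_ge Z n : (forall j, 0 < size (Z j)) ->
  infconcat Z (size (Z 0) + n) = infconcat (shift Z 1) n.
Proof.
move=> ne.
have -> : infconcat Z (size (Z 0) + n) = cat_aux (size (Z 0) + n) (shift Z 1) 0 n.
  rewrite /infconcat /=.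
  have -> : (size (Z 0) + n < size (Z 0)) = false by lia.
  by rewrite addKn -cat_aux_shift addn0.
rewrite /infconcat; apply: cat_aux_fuel; first by move=> j; apply: ne.
  have := ne 0; lia.
lia.
Qed.

Lemma shift_shift X j k : shift (shift X j) k = shift X (j + k).
Proof. apply: functional_extensionality => i; by rewrite /shift addnA. Qed.

Lemma shift0 X : shift X 0 = X.
Proof. by apply: functional_extensionality => i. Qed.

Lemma pos0 X : pos X 0 = 0.
Proof. by rewrite /pos big_ord0. Qed.

Lemma posS X j : pos X j.+1 = pos X j + size (X j).
Proof. by rewrite /pos big_ord_recr. Qed.

Lemma conc_pos X j i : (forall j, 0 < size (X j)) ->
  infconcat X (pos X j + i) = infconcat (shift X j) i.
Proof.
move=> ne; elim: j i => [|j IH] i; first by rewrite pos0 shift0.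
rewrite posS -addnA IH.
have -> : size (X j) = size (shift X j 0) by rewrite /shift addn0.
rewrite conc_ge ?shift_shift ?addn1 // => k; exact: ne.
Qed.

Lemma conc_shift_S X j i : (forall j, 0 < size (X j)) ->
  infconcat (shift X j) (size (X j) + i) = infconcat (shift X j.+1) i.
Proof.
move=> ne; rewrite -conc_pos // -conc_pos // posS addnA //.
Qed.

Lemma conc_block X j i : (forall j, 0 < size (X j)) -> i < size (X j) ->
  infconcat X (pos X j + i) = nth 0 (X j) i.
Proof.
move=> ne h; rewrite conc_pos // conc_lt /shift addn0 //.
Qed.

Lemma cover X : (forall j, 0 < size (X j)) ->
  forall n, exists j i, i < size (X j) /\ n = pos X j + i.
Proof.
move=> ne; elim=> [|n [j [i [h ->]]]].
  by exists 0, 0; rewrite pos0; split => //; apply: ne.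
case: (ltnP i.+1 (size (X j))) => h2.
  by exists j, i.+1; split => //; rewrite addnS.
exists j.+1, 0; split; first exact: ne.
rewrite posS; lia.
Qed.

Lemma decomp_nonempty (P : seq nat -> bool) x X : (forall w, P w -> 0 < size w) ->
  isDecomp P x X -> forall j, 0 < size (X j).
Proof. by move=> h d j; apply: h; case: (d j). Qed.

Lemma decomp_conc (P : seq nat -> bool) x X : (forall w, P w -> 0 < size w) ->
  isDecomp P x X -> forall n, x n = infconcat X n.
Proof.
move=> h d n; have ne := decomp_nonempty h d.
have [j [i [hi ->]]] := cover ne n.
rewrite conc_block //; case: (d j) => _ [m _]; by rewrite m.
Qed.


Lemma decomp_unique (P : seq nat -> bool) x X Y : isDecomp P x X -> isDecomp P x Y -> forall j, X j = Y j.
Proof.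
move=> dX dY.
have step : forall j, pos X j = pos Y j -> X j = Y j.
  move=> j e; case: (dX j) => PX [mX xX]; case: (dY j) => PY [mY xY].
  have s1 := xX _ PY (fun i hi => etrans (mY i hi) (congr1 x (congr1 (addn^~ i) (esym e)))).
  have s2 := xY _ PX (fun i hi => etrans (mX i hi) (congr1 x (congr1 (addn^~ i) e))).
  apply: (@eq_from_nth _ 0); first by apply/eqP; rewrite eqn_leq s1 s2.
  by move=> i hi; rewrite mX // mY ?e //; lia.
suff H : forall j, pos X j = pos Y j by move=> j; apply: step.
elim=> [|j IH]; first by rewrite !pos0.
by rewrite !posS IH (step _ IH).
Qed.

Fixpoint srch (Q : nat -> bool) n := match n with 0 => 0 | n'.+1 => if Q n then n else srch Q n' end.

Lemma srchP Q n : (srch Q n = 0 /\ forall m, 0 < m <= n -> ~~ Q m) \/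
   (0 < srch Q n <= n /\ Q (srch Q n) /\ forall m, srch Q n < m <= n -> ~~ Q m).
Proof.
elim: n => [|n IH] /=; first by left; split => // m; lia.
case: ifP => hq.
  right; split; first lia. split => // m; lia.
case: IH => [[e h]|[h1 [h2 h3]]].
  left; split => // m hm; case: (ltnP m n.+1) => hh; first by apply: h; lia.
  have -> : m = n.+1 by lia. by rewrite hq.
right; split; first lia. split => // m hm; case: (ltnP m n.+1) => hh; first by apply: h3; lia.
have -> : m = n.+1 by lia. by rewrite hq.
Qed.

Lemma decomp_exists (P : seq nat -> bool) x K : (forall p, P [:: x p]) ->
  (forall p w, P w -> pre w (fun i => x (p + i)) -> size w <= K) ->
  exists X, isDecomp P x X.
Proof.
move=> hl hb.
pose mk p l := mkseq (fun i => x (p + i)) l.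
pose len p := srch (fun l => P (mk p l)) K.+1.
have lenP : forall p, 0 < len p /\ P (mk p (len p)) /\
    forall w, P w -> pre w (fun i => x (p + i)) -> size w <= len p.
  move=> p; rewrite /len; case: (srchP (fun l => P (mk p l)) K.+1) => [[e h]|[h1 [h2 h3]]].
    by have := h 1 isT; rewrite /mk /mkseq /= addn0 hl.
  split; first lia. split => // w Pw pw.
  have ew : w = mk p (size w).
    apply: (@eq_from_nth _ 0); first by rewrite size_mkseq.
    by move=> i hi; rewrite nth_mkseq // pw.
  have := hb p w Pw pw => hK.
  rewrite leqNgt; apply/negP => hlt.
  have := h3 (size w); rewrite -ew Pw; move=> hh; have : false by apply: hh; lia.
  done.
pose fix posf j := if j is j'.+1 then posf j' + len (posf j') else 0.
exists (fun j => mk (posf j) (len (posf j))).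
have hpos : forall j, pos (fun j => mk (posf j) (len (posf j))) j = posf j.
  elim=> [|j IH]; first by rewrite pos0.
  by rewrite posS IH /mk size_mkseq.
move=> j; rewrite hpos; have [h1 [h2 h3]] := lenP (posf j).
split => //; split.
  by move=> i; rewrite /mk size_mkseq => hi; rewrite nth_mkseq.
by move=> w Pw pw; rewrite /mk size_mkseq; apply: h3.
Qed.

Lemma decomp_spec (P : seq nat -> bool) x : (exists X, isDecomp P x X) -> isDecomp P x (decomp P x).
Proof. move=> h; rewrite /decomp; exact: epsilon_spec. Qed.

Lemma conc_const (Z : nat -> seq nat) k : (forall j, Z j = [:: k]) -> forall n, infconcat Z n = k.
Proof.
move=> h n; elim: n Z h => [|n IH] Z h; first by rewrite conc_lt h.
have ne : forall j, 0 < size (Z j) by move=> j; rewrite h.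
have := conc_ge n ne; rewrite h /= => ->; apply: IH => j; exact: h.
Qed.

Lemma pos_ge X : (forall j, 0 < size (X j)) -> forall j, j <= pos X j.
Proof. move=> ne; elim=> [|j IH]; first by rewrite pos0. rewrite posS; have := ne j; lia. Qed.

Lemma omega_conc N kappa (Y : nat -> seq nat) : (forall j, 0 < size (Y j)) ->
  (forall j, all (inSigma N) (Y j)) -> (exists J, forall j, J <= j -> Y j = [:: kappa]) ->
  inOmega N kappa (infconcat Y).
Proof.
move=> ne al [J hJ]; split.
  move=> n; have [j [i [hi ->]]] := cover ne n; rewrite conc_block //.
  by apply: (allP (al j)); apply: mem_nth.
exists (pos Y J) => m hm; have -> : m = pos Y J + (m - pos Y J) by lia.
rewrite conc_pos //; apply: conc_const => j; apply: hJ; lia.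
Qed.

Lemma decomp_kappa (P : seq nat -> bool) x X kappa n0 : (forall w, P w -> 0 < size w) ->
  (forall B, P B -> pre B (fun _ => kappa) -> B = [:: kappa]) -> isDecomp P x X ->
  (forall m, n0 <= m -> x m = kappa) -> forall j, n0 <= j -> X j = [:: kappa].
Proof.
move=> hs hk d hx j hj; have ne := decomp_nonempty hs d.
case: (d j) => PX [mX _]; apply: hk => // i hi; rewrite mX // hx //.
have := pos_ge ne j; lia.
Qed.

Lemma bound_len (P : seq nat -> bool) x n0 kappa gamma : kappa <> gamma ->
  (forall B, P B -> 1 < size B -> nth 0 B (size B).-1 = gamma) ->
  (forall m, n0 <= m -> x m = kappa) ->
  forall p w, P w -> pre w (fun i => x (p + i)) -> size w <= n0.+1.
Proof.
move=> kg hl hx p w Pw pw; case: (ltnP 1 (size w)) => h; last lia.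
have := hl w Pw h; rewrite pw; last lia.
case: (ltnP (p + (size w).-1) n0) => h2; first lia.
by rewrite hx.
Qed.

Section Letters.
Variables (N tau kappa alpha gamma : nat).
Hypotheses (Stau : inSigma N tau) (Skappa : inSigma N kappa) (Salpha : inSigma N alpha) (Sgamma : inSigma N gamma).
Hypotheses (tk : tau <> kappa) (tg : tau <> gamma) (ka : kappa <> alpha) (kg : kappa <> gamma) (ag : alpha <> gamma).

Let M := inCMS N tau kappa alpha gamma.
Let M' := inCM'S N tau kappa alpha gamma.
Let G0 := g0 tau kappa alpha gamma.
Let G0i := g0inv tau kappa alpha gamma.

Definition TG k := tau :: nseq k gamma.
Definition KG k := kappa :: nseq k alpha ++ [:: kappa; gamma].
Definition KGG k := kappa :: nseq k alpha ++ [:: kappa; gamma; gamma].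
Definition TGG := [:: tau; gamma; gamma].

Lemma sTG k : size (TG k) = k.+1. Proof. by rewrite /= size_nseq. Qed.
Lemma sKG k : size (KG k) = k.+3. Proof. by rewrite /= size_cat size_nseq addn2. Qed.
Lemma sKGG k : size (KGG k) = k.+4. Proof. by rewrite /= size_cat size_nseq addn3. Qed.

Lemma neq_nat (a b : nat) : a <> b -> (a == b) = false.
Proof. by move=> h; apply/eqP. Qed.

Lemma M_cases w : M w ->
  [\/ exists2 k, 2 <= k & w = TG k, exists k, w = KG k | exists2 a, inSigma N a & w = [:: a]].
Proof.
rewrite /M /inCMS /isTauGam /isKAKG /isLetter; case/orP => [/orP[]|].
- case: w => [|a t] //; case/andP => /andP[/eqP -> h] /all_pred1P e.
  by apply: Or31; exists (size t) => //; rewrite /TG -e.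
- by case/andP => _ /eqP e; apply: Or32; exists (size w - 3).
- by case: w => [|a [|]] // /andP[_ /andP[h _]]; apply: Or33; exists a.
Qed.

Lemma M'_cases w : M' w ->
  [\/ exists k, w = KG k, exists k, w = KGG k, w = TGG | exists2 a, inSigma N a & w = [:: a]].
Proof.
rewrite /M' /inCM'S /isKAKGG /isKAKG /isLetter; case/orP => [/orP[/orP[]|]|].
- by case/andP => _ /eqP e; apply: Or41; exists (size w - 3).
- by case/andP => _ /eqP e; apply: Or42; exists (size w - 4).
- by move/eqP => ->; apply: Or43.
- by case: w => [|a [|]] // /andP[_ /andP[h _]]; apply: Or44; exists a.
Qed.

Lemma isTauGam_TG k : 2 <= k -> isTauGam tau gamma (TG k).
Proof. by move=> h; rewrite /isTauGam /TG eqxx size_nseq h all_pred1_nseq. Qed.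
Lemma isTauGam_KG k : isTauGam tau gamma (KG k) = false.
Proof. by rewrite /isTauGam /KG (neq_nat (fun e => tk (esym e))). Qed.
Lemma isTauGam_L a : isTauGam tau gamma [:: a] = false.
Proof. by rewrite /isTauGam andbF andFb. Qed.
Lemma isKAKG_KG k : isKAKG kappa alpha gamma (KG k).
Proof. rewrite /isKAKG sKG; have -> : k.+3 - 3 = k by lia.
by rewrite eqxx andbT. Qed.
Lemma isKAKG_TG k : isKAKG kappa alpha gamma (TG k) = false.
Proof. by rewrite /isKAKG /TG /= eqseq_cons neq_nat // andbF. Qed.
Lemma isKAKG_KGG k : isKAKG kappa alpha gamma (KGG k) = false.
Proof.
rewrite /isKAKG sKGG; have -> : k.+4 - 3 = k.+1 by lia.
apply/negP => /andP[_ /eqP e].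
have := congr1 (fun s => nth 0 s k.+1) e.
rewrite /KGG /= !nth_cat !size_nseq ltnn subnn -cat_cons nth_cat /= size_nseq ltnSn.
have -> : nth 0 (alpha :: nseq k alpha) k = alpha by clear; have := @nth_nseq _ 0 k.+1 alpha k; rewrite ltnSn.
by move=> e'; apply: ka.
Qed.
Lemma isKAKG_TGG : isKAKG kappa alpha gamma TGG = false.
Proof. by rewrite /isKAKG /TGG /= eqseq_cons neq_nat. Qed.
Lemma isKAKG_L a : isKAKG kappa alpha gamma [:: a] = false.
Proof. by []. Qed.
Lemma isKAKGG_KGG k : isKAKGG kappa alpha gamma (KGG k).
Proof. rewrite /isKAKGG sKGG; have -> : k.+4 - 4 = k by lia.
by rewrite eqxx andbT. Qed.
Lemma isKAKGG_TGG : isKAKGG kappa alpha gamma TGG = false.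
Proof. by []. Qed.
Lemma isKAKGG_L a : isKAKGG kappa alpha gamma [:: a] = false.
Proof. by []. Qed.

Lemma g0_TG k : 2 <= k -> G0 (TG k) = KG (k - 2).
Proof. by move=> h; rewrite /G0 /g0 isTauGam_TG // sTG; congr KG; lia. Qed.
Lemma g0_KG k : G0 (KG k) = if k is k'.+1 then KGG k' else TGG.
Proof.
rewrite /G0 /g0 isTauGam_KG isKAKG_KG sKG.
case: k => [|k] //=. by rewrite /KGG; have -> : k.+4 - 4 = k by lia.
Qed.
Lemma g0_L a : G0 [:: a] = [:: a].
Proof. by rewrite /G0 /g0 isTauGam_L isKAKG_L. Qed.

Lemma g0i_KG k : G0i (KG k) = TG k.+2.
Proof. by rewrite /G0i /g0inv isKAKG_KG sKG /TG; do 2 f_equal; lia. Qed.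
Lemma g0i_KGG k : G0i (KGG k) = KG k.+1.
Proof. by rewrite /G0i /g0inv isKAKG_KGG isKAKGG_KGG sKGG /KG; do 3 f_equal; lia. Qed.
Lemma g0i_TGG : G0i TGG = KG 0.
Proof. by rewrite /G0i /g0inv isKAKG_TGG isKAKGG_TGG eqxx. Qed.
Lemma g0i_L a : G0i [:: a] = [:: a].
Proof. by rewrite /G0i /g0inv isKAKG_L isKAKGG_L eqseq_cons andbF. Qed.

Lemma M_TG k : 2 <= k -> M (TG k).
Proof. by move=> h; rewrite /M /inCMS isTauGam_TG. Qed.
Lemma M_KG k : M (KG k).
Proof. by rewrite /M /inCMS isKAKG_KG orbT. Qed.
Lemma M_L a : inSigma N a -> M [:: a].
Proof. by move=> h; rewrite /M /inCMS /isLetter /= h orbT. Qed.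
Lemma M'_KG k : M' (KG k).
Proof. by rewrite /M' /inCM'S isKAKG_KG. Qed.
Lemma M'_KGG k : M' (KGG k).
Proof. by rewrite /M' /inCM'S isKAKGG_KGG orbT. Qed.
Lemma M'_TGG : M' TGG.
Proof. by rewrite /M' /inCM'S eqxx !orbT. Qed.
Lemma M'_L a : inSigma N a -> M' [:: a].
Proof. by move=> h; rewrite /M' /inCM'S /isLetter /= h !orbT. Qed.

Lemma g0_M B : M B -> M' (G0 B).
Proof.
case/M_cases => [[k h ->]|[k ->]|[a h ->]].
- by rewrite g0_TG // M'_KG.
- by rewrite g0_KG; case: k => [|k]; [apply: M'_TGG | apply: M'_KGG].
- by rewrite g0_L M'_L.
Qed.
Lemma g0i_M U : M' U -> M (G0i U).
Proof.
case/M'_cases => [[k ->]|[k ->]|->|[a h ->]].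
- by rewrite g0i_KG M_TG.
- by rewrite g0i_KGG M_KG.
- by rewrite g0i_TGG M_KG.
- by rewrite g0i_L M_L.
Qed.
Lemma g0_g0i U : M' U -> G0 (G0i U) = U.
Proof.
case/M'_cases => [[k ->]|[k ->]|->|[a h ->]].
- by rewrite g0i_KG g0_TG // subn2.
- by rewrite g0i_KGG g0_KG.
- by rewrite g0i_TGG g0_KG.
- by rewrite g0i_L g0_L.
Qed.
Lemma g0i_g0 B : M B -> G0i (G0 B) = B.
Proof.
case/M_cases => [[k h ->]|[k ->]|[a h ->]].
- by rewrite g0_TG // g0i_KG; congr TG; lia.
- by rewrite g0_KG; case: k => [|k]; rewrite ?g0i_TGG ?g0i_KGG.
- by rewrite g0_L g0i_L.
Qed.


Lemma M_size B : M B -> 0 < size B.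
Proof. by case/M_cases => [[k _ ->]|[k ->]|[a _ ->]]; rewrite ?sTG ?sKG. Qed.
Lemma M'_size B : M' B -> 0 < size B.
Proof. by case/M'_cases => [[k ->]|[k ->]|->|[a _ ->]]; rewrite ?sKGG ?sKG. Qed.

Lemma nth_TG k i : nth 0 (TG k) i = if i == 0 then tau else if i <= k then gamma else 0.
Proof.
case: i => [|i] //=; rewrite nth_nseq.
by case: ifP.
Qed.
Lemma nth_KG k i : nth 0 (KG k) i =
  if i == 0 then kappa else if i <= k then alpha else nth 0 [:: kappa; gamma] (i - k.+1).
Proof.
case: i => [|i] //=; rewrite nth_cat size_nseq.
case: ltnP => h; first by rewrite nth_nseq h.
by rewrite subSS.
Qed.
Lemma nth_KGG k i : nth 0 (KGG k) i =
  if i == 0 then kappa else if i <= k then alpha else nth 0 [:: kappa; gamma; gamma] (i - k.+1).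
Proof.
case: i => [|i] //=; rewrite nth_cat size_nseq.
case: ltnP => h; first by rewrite nth_nseq h.
by rewrite subSS.
Qed.

Definition pTG k (t : nat -> nat) := t 0 = tau /\ forall i, 0 < i <= k -> t i = gamma.
Definition pKG k (t : nat -> nat) :=
  [/\ t 0 = kappa, forall i, 0 < i <= k -> t i = alpha, t k.+1 = kappa & t k.+2 = gamma].
Definition pKGG k t := pKG k t /\ t k.+3 = gamma.
Definition pTGG (t : nat -> nat) := [/\ t 0 = tau, t 1 = gamma & t 2 = gamma].

Lemma pre_TG k t : pre (TG k) t <-> pTG k t.
Proof.
split.
  move=> h; split; first by rewrite -h ?sTG.
  move=> i hi; rewrite -h ?sTG ?nth_TG; last lia.
  by rewrite ifF ?ifT //; lia.
case=> h0 h i; rewrite sTG nth_TG => hi.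
case: eqP => [->|ne] //; rewrite ifT; last lia.
by rewrite h //; lia.
Qed.

Lemma pre_KG k t : pre (KG k) t <-> pKG k t.
Proof.
split.
  move=> h; split; first by rewrite -h ?sKG.
  - move=> i hi; rewrite -h ?sKG ?nth_KG; last lia.
    by rewrite ifF ?ifT //; lia.
  - by rewrite -h ?sKG ?nth_KG // ifF ?ifF ?subnn //; lia.
  - by rewrite -h ?sKG ?nth_KG // ifF ?ifF ?subSnn //; lia.
case=> h0 h h1 h2 i; rewrite sKG nth_KG => hi.
case: eqP => [->|ne] //; case: ifP => hk; first by rewrite h //; lia.
have [->|->] : i = k.+1 \/ i = k.+2 by lia.
  by rewrite subnn.
by rewrite subSnn.
Qed.

Lemma pre_KGG k t : pre (KGG k) t <-> pKGG k t.
Proof.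
have nthk : forall i, k < i -> nth 0 (KGG k) i = nth 0 [:: kappa; gamma; gamma] (i - k.+1).
  by move=> i hi; rewrite nth_KGG ifF ?ifF //; lia.
split.
  move=> h; split; first split; first by rewrite -h ?sKGG.
  - move=> i hi; rewrite -h ?sKGG ?nth_KGG; last lia.
    by rewrite ifF ?ifT //; lia.
  - by rewrite -h; [rewrite nthk ?subnn|rewrite sKGG; lia].
  - by rewrite -h; [rewrite nthk ?subSnn|rewrite sKGG; lia].
  - rewrite -h; [rewrite nthk; last lia|rewrite sKGG; lia].
    by have -> : k.+3 - k.+1 = 2 by lia.
case=> [[h0 h h1 h2] h3] i; rewrite sKGG nth_KGG => hi.
case: eqP => [->|ne] //; case: ifP => hk; first by rewrite h //; lia.
have [->|[->|->]] : i = k.+1 \/ i = k.+2 \/ i = k.+3 by lia.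
- by rewrite subnn.
- by rewrite subSnn.
- by have -> : k.+3 - k.+1 = 2 by lia.
Qed.

Lemma pre_TGG t : pre TGG t <-> pTGG t.
Proof.
split; first by move=> h; split; rewrite -h.
by case=> h0 h1 h2 [|[|[|i]]].
Qed.

Lemma pre_L a t : pre [:: a] t <-> t 0 = a.
Proof. by split => [h|h [|i]] //; rewrite -h. Qed.

Lemma KA_unique k k' t : pKG k t -> pKG k' t -> k = k'.
Proof.
case=> _ a1 k1 _ [_ a2 k2 _]; case: (ltngtP k k') => // h.
- by exfalso; apply: ka; rewrite -k1 a2 //; lia.
- by exfalso; apply: ka; rewrite -k2 a1 //; lia.
Qed.

Definition Pm m (s : nat -> nat) := (forall i, i < m -> s i = alpha) /\ s m = kappa /\ s m.+1 = gamma.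
Definition H3 s := exists m, Pm m s.
Definition GG (s : nat -> nat) := s 0 = gamma /\ s 1 = gamma.

Definition condM B s := (isTauGam tau gamma B -> s 0 <> gamma) /\
  (B = [:: tau] -> ~ GG s) /\ (B = [:: kappa] -> ~ H3 s).
Definition condM' U s := (isKAKG kappa alpha gamma U -> s 0 <> gamma) /\
  (U = [:: tau] -> ~ GG s) /\ (U = [:: kappa] -> ~ H3 s).
Definition maxim (P : seq nat -> bool) (B : seq nat) t := forall w, P w -> pre w t -> size w <= size B.

Lemma notL (w : seq nat) a : 1 < size w -> w = [:: a] -> False.
Proof. by move=> h e; move: h; rewrite e. Qed.

Lemma shiftS (t s : nat -> nat) (a : nat) : pre [:: a] t -> (forall i, t (size [:: a] + i) = s i) ->
  forall i, t i.+1 = s i.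
Proof. by move=> _ h i; rewrite -h. Qed.

Lemma maxM_cond B t s : M B -> pre B t -> (forall i, t (size B + i) = s i) ->
  maxim M B t -> condM B s.
Proof.
move=> MB pB hs mx.
case/M_cases: MB => [[k hk eB]|[k eB]|[a ha eB]]; subst B.
- split; [|split]; last by move=> e; exfalso; apply: (notL _ e); rewrite sTG; lia.
    move=> _ s0; have := mx (TG k.+1) (M_TG _) => /(_ ltac:(lia)).
    have [t0 tg'] := (pre_TG k t).1 pB.
    rewrite !sTG => hh; have : k.+2 <= k.+1; last lia.
    apply: hh; apply/pre_TG; split => // i hi.
    case: (leqP i k) => hik; first by apply: tg'; lia.
    have -> : i = k.+1 + 0 by lia.
    by rewrite -(sTG k) hs.
  by move=> e; exfalso; apply: (notL _ e); rewrite sTG; lia.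
- split; [|split].
  + by rewrite isTauGam_KG.
  + by move=> e; exfalso; apply: (notL _ e); rewrite sKG.
  + by move=> e; exfalso; apply: (notL _ e); rewrite sKG.
- have sh := shiftS pB hs; have t0 := (pre_L _ _).1 pB.
  split; [|split].
  + by rewrite isTauGam_L.
  + case=> ea [g0' g1]; subst a.
    have := mx (TG 2) (M_TG (leqnn 2)); rewrite sTG.
    have : pre (TG 2) t.
      apply/pre_TG; split => // i hi; have : i = 1 \/ i = 2 by lia.
      by case=> ->; rewrite sh.
    by move=> p /(_ p).
  + case=> ea [m [ha' [hk hg]]]; subst a.
    have := mx (KG m) (M_KG m); rewrite sKG.
    have : pre (KG m) t.
      apply/pre_KG; split => //; try by rewrite sh.
      move=> i hi; have e : i = i.-1.+1 by lia.
      by rewrite e sh ha' //; lia.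
    by move=> p /(_ p).
Qed.

Lemma condM_max B t s : M B -> pre B t -> (forall i, t (size B + i) = s i) ->
  condM B s -> maxim M B t.
Proof.
move=> MB pB hs [c1 [c2 c3]] w Mw pw.
case/M_cases: MB pB hs c1 c2 c3 => [[k hk ->]|[k ->]|[a ha ->]] pB hs c1 c2 c3.
- have [t0 tg'] := (pre_TG k t).1 pB.
  case/M_cases: Mw pw => [[k' hk' ->]|[k' ->]|[a' ha' ->]] pw; rewrite ?sTG //.
  + have [_ tg2] := (pre_TG k' t).1 pw.
    rewrite leqNgt; apply/negP => hlt; apply: (c1 (isTauGam_TG hk)).
    by rewrite -hs sTG addn0 tg2 //; lia.
  + by have [u0 _ _ _] := (pre_KG k' t).1 pw; exfalso; apply: tk; rewrite -t0 u0.
- have pk := (pre_KG k t).1 pB; have [t0 _ _ _] := pk.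
  case/M_cases: Mw pw => [[k' hk' ->]|[k' ->]|[a' ha' ->]] pw; rewrite ?sKG //.
  + by have [u0 _] := (pre_TG k' t).1 pw; exfalso; apply: tk; rewrite -t0 u0.
  + by rewrite (KA_unique ((pre_KG k' t).1 pw) pk).
- have sh := shiftS pB hs; have t0 := (pre_L _ _).1 pB.
  case/M_cases: Mw pw => [[k' hk' ->]|[k' ->]|[a' ha' ->]] pw //.
  + have [u0 ug] := (pre_TG k' t).1 pw; exfalso.
    apply: (c2 _); first by rewrite -t0 u0.
    by split; rewrite -sh ug //; lia.
  + have [u0 ua uk ug] := (pre_KG k' t).1 pw; exfalso.
    apply: (c3 _); first by rewrite -t0 u0.
    exists k'; split; [|split]; rewrite -?sh //.
    by move=> i hi; rewrite -sh ua //; lia.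
Qed.

Lemma maxM'_cond B t s : M' B -> pre B t -> (forall i, t (size B + i) = s i) ->
  maxim M' B t -> condM' B s.
Proof.
move=> MB pB hs mx.
case/M'_cases: MB pB hs mx => [[k ->]|[k ->]|->|[a ha ->]] pB hs mx.
- split; [|split]; try by move=> e; exfalso; apply: (notL _ e); rewrite sKG.
  move=> _ s0; have := mx (KGG k) (M'_KGG k); rewrite sKG sKGG.
  have : pre (KGG k) t.
    apply/pre_KGG; split; first exact/pre_KG.
    by rewrite -s0 -hs sKG addn0.
  by move=> p /(_ p); rewrite ltnn.
- split; [|split]; try by move=> e; exfalso; apply: (notL _ e); rewrite sKGG.
  by rewrite isKAKG_KGG.
- split; [|split]; try by move=> e; exfalso; apply: (notL _ e).
  by rewrite isKAKG_TGG.
- have sh := shiftS pB hs; have t0 := (pre_L _ _).1 pB.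
  split; [|split].
  + by rewrite isKAKG_L.
  + case=> ea [g0' g1]; subst a.
    have := mx TGG M'_TGG.
    have : pre TGG t by apply/pre_TGG; split; rewrite ?sh.
    by move=> p /(_ p).
  + case=> ea [m [ha' [hk hg]]]; subst a.
    have := mx (KG m) (M'_KG m); rewrite sKG.
    have : pre (KG m) t.
      apply/pre_KG; split => //; try by rewrite sh.
      move=> i hi; have e : i = i.-1.+1 by lia.
      by rewrite e sh ha' //; lia.
    by move=> p /(_ p).
Qed.

Lemma condM'_max B t s : M' B -> pre B t -> (forall i, t (size B + i) = s i) ->
  condM' B s -> maxim M' B t.
Proof.
move=> MB pB hs [c1 [c2 c3]] w Mw pw.
case/M'_cases: MB pB hs c1 c2 c3 => [[k ->]|[k ->]|->|[a ha ->]] pB hs c1 c2 c3.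
- have pk := (pre_KG k t).1 pB; have [t0 _ _ _] := pk.
  case/M'_cases: Mw pw => [[k' ->]|[k' ->]|->|[a' ha' ->]] pw; rewrite ?sKG //.
  + by rewrite (KA_unique ((pre_KG k' t).1 pw) pk).
  + have [pk' u3] := (pre_KGG k' t).1 pw.
    have ek := KA_unique pk' pk; subst k'.
    by exfalso; apply: (c1 (isKAKG_KG k)); rewrite -hs sKG addn0.
- have [pk _] := (pre_KGG k t).1 pB; have [t0 _ _ _] := pk.
  case/M'_cases: Mw pw => [[k' ->]|[k' ->]|->|[a' ha' ->]] pw; rewrite ?sKGG //.
  + by rewrite sKG (KA_unique ((pre_KG k' t).1 pw) pk).
  + have [pk' _] := (pre_KGG k' t).1 pw.
    by rewrite (KA_unique pk' pk).
- have [t0 _ _] := (pre_TGG t).1 pB.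
  case/M'_cases: Mw pw => [[k' ->]|[k' ->]|->|[a' ha' ->]] pw //.
  + by have [u0 _ _ _] := (pre_KG k' t).1 pw; exfalso; apply: tk; rewrite -t0 u0.
  + by have [[u0 _ _ _] _] := (pre_KGG k' t).1 pw; exfalso; apply: tk; rewrite -t0 u0.
- have sh := shiftS pB hs; have t0 := (pre_L _ _).1 pB.
  have h3 : forall k', pKG k' t -> False.
    move=> k' [u0 ua uk ug].
    apply: (c3 _); first by rewrite -t0 u0.
    exists k'; split; [|split]; rewrite -?sh //.
    by move=> i hi; rewrite -sh ua //; lia.
  case/M'_cases: Mw pw => [[k' ->]|[k' ->]|->|[a' ha' ->]] pw //.
  + by exfalso; apply: (h3 k'); apply/pre_KG.
  + by exfalso; apply: (h3 k'); case: ((pre_KGG k' t).1 pw).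
  + have [u0 u1 u2] := (pre_TGG t).1 pw; exfalso.
    apply: (c2 _); first by rewrite -t0 u0.
    by split; rewrite -sh.
Qed.

Lemma head_gamma B : M B -> nth 0 B 0 = gamma -> B = [:: gamma].
Proof.
case/M_cases => [[k _ ->]|[k ->]|[a _ ->]] //= h.
by rewrite h.
Qed.

Lemma head_g0 B : M B -> (nth 0 (G0 B) 0 = gamma <-> nth 0 B 0 = gamma).
Proof.
case/M_cases => [[k hk ->]|[k ->]|[a _ ->]].
- by rewrite g0_TG //=.
- rewrite g0_KG; case: k => [|k] /=; split => h; exfalso; by [apply: tg|apply: kg].
- by rewrite g0_L.
Qed.

Lemma conc_letter Z a : (forall j, 0 < size (Z j)) -> Z 0 = [:: a] ->
  infconcat Z 0 = a /\ forall i, infconcat Z i.+1 = infconcat (shift Z 1) i.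
Proof.
move=> ne e; split; first by rewrite conc_lt e.
by move=> i; have := conc_ge i ne; rewrite e.
Qed.

Lemma neZ (Z : nat -> seq nat) : (forall i, M (Z i)) -> forall j, 0 < size (Z j).
Proof. by move=> h j; apply: M_size. Qed.
Lemma neG (Z : nat -> seq nat) : (forall i, M (Z i)) -> forall j, 0 < size (G0 (Z j)).
Proof. by move=> h j; apply/M'_size/g0_M. Qed.

Lemma H1 (Z : nat -> seq nat) : (forall i, M (Z i)) ->
  (infconcat Z 0 = gamma <-> infconcat (fun i => G0 (Z i)) 0 = gamma).
Proof.
move=> aZ; rewrite !conc_lt; try by [apply: neZ | apply: (neG aZ)].
by rewrite head_g0.
Qed.

Lemma H2 (Z : nat -> seq nat) : (forall i, M (Z i)) ->
  (GG (infconcat Z) <-> GG (infconcat (fun i => G0 (Z i)))).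
Proof.
move=> aZ; have nZ := neZ aZ; have nG := neG aZ.
have aZ1 : forall i, M (shift Z 1 i) by move=> i; apply: aZ.
have key : nth 0 (Z 0) 0 = gamma ->
   (infconcat Z 0 = gamma /\ forall i, infconcat Z i.+1 = infconcat (shift Z 1) i) /\
   (infconcat (fun i => G0 (Z i)) 0 = gamma /\ forall i, infconcat (fun i => G0 (Z i)) i.+1 =
        infconcat (fun i => G0 (shift Z 1 i)) i).
  move=> h; have e := head_gamma (aZ 0) h.
  split; first exact: conc_letter e.
  by apply: (conc_letter nG); rewrite e g0_L.
split.
- case=> h0 h1; have := key; rewrite -conc_lt //; move/(_ h0) => [[_ c] [d0 d]].
  by split => //; rewrite d -H1 // -c.
- case=> h0 h1; have h0' := (H1 aZ).2 h0.
  have := key; rewrite -conc_lt //; move/(_ h0') => [[_ c] [d0 d]].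
  by split => //; rewrite c H1 // -d.
Qed.

Lemma Pm_ext m s s' : (forall i, s i = s' i) -> Pm m s -> Pm m s'.
Proof.
move=> e [h1 [h2 h3]]; split; last by rewrite -!e.
by move=> i hi; rewrite -e h1.
Qed.

Lemma Pm0 s : Pm 0 s <-> s 0 = kappa /\ s 1 = gamma.
Proof. by split => [[_ h]|h] //; split. Qed.

Lemma PmS m s : Pm m.+1 s <-> s 0 = alpha /\ Pm m (fun i => s i.+1).
Proof.
split.
  case=> ha [hk hg]; split; first exact: ha.
  by split => // i hi; apply: ha.
case=> h0 [ha [hk hg]]; split => // -[|i] hi //; exact: ha.
Qed.

Lemma Pm_S1 m s : Pm m.+1 s -> s 1 <> gamma.
Proof.
case: m => [|m] [ha [hk hg]].
- by rewrite hk.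
- by rewrite ha.
Qed.

Lemma nth1_KG k : nth 0 (KG k) 1 <> gamma.
Proof. rewrite nth_KG /=; case: k => [|k] //=. Qed.
Lemma nth1_KGG k : nth 0 (KGG k) 1 <> gamma.
Proof. rewrite nth_KGG /=; case: k => [|k] //=. Qed.

Lemma H3_step m : forall Z : nat -> seq nat, (forall i, M (Z i)) ->
  (Pm m (infconcat Z) <-> Pm m (infconcat (fun i => G0 (Z i)))).
Proof.
elim: m => [|m IH] Z aZ; have nZ := neZ aZ; have nG := neG aZ;
  have aZ1 : (forall i, M (shift Z 1 i)) by move=> i; apply: aZ.
- rewrite !Pm0; split; case=> h0 h1.
  + case/M_cases: (aZ 0) => [[k hk e]|[k e]|[a ha e]].
    * by exfalso; apply: tk; rewrite -h0 conc_lt e.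
    * by exfalso; move: h1; rewrite conc_lt e ?sKG //; apply: nth1_KG.
    * have [c0 c] := conc_letter nZ e.
      have eG : G0 (Z 0) = [:: a] by rewrite e g0_L.
      have [d0 d] := conc_letter nG eG.
      split; first by rewrite d0 -c0.
      by rewrite d -H1 // -c.
  + case/M_cases: (aZ 0) => [[k hk e]|[k e]|[a ha e]].
    * by exfalso; move: h1; rewrite conc_lt e g0_TG ?sKG //; apply: nth1_KG.
    * have eG := g0_KG k; rewrite -e in eG.
      case: k e eG => [|k] e eG.
      - by exfalso; apply: tk; rewrite -h0 conc_lt /= eG.
      - by exfalso; move: h1; rewrite conc_lt /= eG ?sKGG //; apply: nth1_KGG.
    * have [c0 c] := conc_letter nZ e.
      have eG : G0 (Z 0) = [:: a] by rewrite e g0_L.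
      have [d0 d] := conc_letter nG eG.
      split; first by rewrite c0 -d0.
      by rewrite c H1 // -d.
- split => hP; have s1 := Pm_S1 hP; move/PmS: hP => [h0 hP]; apply/PmS.
  + case/M_cases: (aZ 0) => [[k hk e]|[k e]|[a ha e]].
    * exfalso; apply: s1; rewrite conc_lt; last by rewrite e sTG; lia.
      by rewrite e nth_TG /=; case: ifP => //; lia.
    * by exfalso; apply: ka; rewrite -h0 conc_lt e.
    * have [c0 c] := conc_letter nZ e.
      have eG : G0 (Z 0) = [:: a] by rewrite e g0_L.
      have [d0 d] := conc_letter nG eG.
      split; first by rewrite d0 -c0.
      apply: (Pm_ext (s := infconcat (fun i => G0 (shift Z 1 i)))) => [i|]; first by rewrite d.
      apply/(IH (shift Z 1) aZ1); exact: (Pm_ext c).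
  + case/M_cases: (aZ 0) => [[k hk e]|[k e]|[a ha e]].
    * by exfalso; apply: ka; rewrite -h0 conc_lt e ?g0_TG.
    * have eG := g0_KG k; rewrite -e in eG.
      case: k e eG => [|k] e eG.
      - by exfalso; apply: s1; rewrite conc_lt /= eG.
      - by exfalso; apply: ka; rewrite -h0 conc_lt /= eG.
    * have [c0 c] := conc_letter nZ e.
      have eG : G0 (Z 0) = [:: a] by rewrite e g0_L.
      have [d0 d] := conc_letter nG eG.
      split; first by rewrite c0 -d0.
      apply: (Pm_ext (s := infconcat (shift Z 1))) => [i|]; first by rewrite c.
      apply/(IH (shift Z 1) aZ1); apply: (Pm_ext _ hP) => i; exact: d.
Qed.

Lemma H3_iff (Z : nat -> seq nat) : (forall i, M (Z i)) ->
  (H3 (infconcat Z) <-> H3 (infconcat (fun i => G0 (Z i)))).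
Proof. by move=> aZ; split; case=> m h; exists m; [apply/(H3_step m aZ) | apply/(H3_step m aZ)]. Qed.

Lemma transfer B (Z : nat -> seq nat) : M B -> (forall i, M (Z i)) ->
  (condM B (infconcat Z) <-> condM' (G0 B) (infconcat (fun i => G0 (Z i)))).
Proof.
move=> MB aZ; have h1 := H1 aZ; have h2 := H2 aZ; have h3 := H3_iff aZ.
case/M_cases: MB => [[k hk ->]|[k ->]|[a ha ->]].
- rewrite g0_TG // /condM /condM' isTauGam_TG // isKAKG_KG.
  split; case=> c1 _; (split; [|split]); try by move=> e; exfalso; apply: (notL _ e);
    rewrite ?sKG ?sTG; lia.
  + by move=> _ e; apply: (c1 isT); apply/h1.
  + by move=> _ e; apply: (c1 isT); apply/h1.
- rewrite g0_KG /condM /condM' isTauGam_KG.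
  case: k => [|k]; rewrite ?isKAKG_TGG ?isKAKG_KGG;
  split => _; (split; [|split]) => // e; exfalso; apply: (notL _ e);
    rewrite ?sKG ?sKGG //.
- rewrite g0_L /condM /condM' isTauGam_L isKAKG_L.
  split; case=> _ [c2 c3]; (split; [|split]) => // e.
  + by rewrite -h2; apply: c2.
  + by rewrite -h3; apply: c3.
  + by rewrite h2; apply: c2.
  + by rewrite h3; apply: c3.
Qed.

Lemma part1 (x : nat -> nat) X : isDecomp M x X ->
  isDecomp M' (infconcat (fun j => G0 (X j))) (fun j => G0 (X j)).
Proof.
move=> d; have aX : forall j, M (X j) by move=> j; case: (d j).
have nX := neZ aX; have nG := neG aX.
have xc := decomp_conc M_size d.
move=> j; split; first exact: g0_M.
split; first by move=> i hi; rewrite conc_block.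
move=> w Mw pw.
set Y := fun j => G0 (X j).
have pw' : pre w (infconcat (shift Y j)) by move=> i hi; rewrite -conc_pos // pw.
apply: (condM'_max (s := infconcat (shift Y j.+1)) _ _ _ _ Mw pw').
- exact: g0_M.
- by move=> i hi; rewrite -conc_pos // conc_block.
- by move=> i; rewrite conc_shift_S.
- have aZ : forall i, M (shift X j.+1 i) by move=> i; apply: aX.
  apply/(transfer (aX j) aZ).1.
  apply: (maxM_cond (t := infconcat (shift X j))) => //.
  + by move=> i hi; rewrite -conc_pos // conc_block.
  + by move=> i; rewrite conc_shift_S.
  + move=> w0 Mw0 pw0; case: (d j) => _ [_ mx]; apply: mx => // i hi.
    by rewrite xc conc_pos // pw0.
Qed.

Lemma part2 (u : nat -> nat) U : isDecomp M' u U ->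
  isDecomp M (infconcat (fun j => G0i (U j))) (fun j => G0i (U j)).
Proof.
move=> d; have aU : forall j, M' (U j) by move=> j; case: (d j).
set X := fun j => G0i (U j).
have aX : forall j, M (X j) by move=> j; apply: g0i_M.
have nX := neZ aX; have nU : forall j, 0 < size (U j) by move=> j; apply: M'_size.
have uc := decomp_conc M'_size d.
move=> j; split; first exact: aX.
split; first by move=> i hi; rewrite conc_block.
move=> w Mw pw.
have pw' : pre w (infconcat (shift X j)) by move=> i hi; rewrite -conc_pos // pw.
apply: (condM_max (s := infconcat (shift X j.+1)) _ _ _ _ Mw pw').
- exact: aX.
- by move=> i hi; rewrite -conc_pos // conc_block.
- by move=> i; rewrite conc_shift_S.
- have aZ : forall i, M (shift X j.+1 i) by move=> i; apply: aX.
  apply/(transfer (aX j) aZ).2.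
  have -> : G0 (X j) = U j by rewrite g0_g0i.
  have -> : (fun i => G0 (shift X j.+1 i)) = shift U j.+1.
    by apply: functional_extensionality => i; rewrite /shift /X g0_g0i.
  apply: (maxM'_cond (t := infconcat (shift U j))) => //.
  + by move=> i hi; rewrite -conc_pos // conc_block.
  + by move=> i; rewrite conc_shift_S.
  + move=> w0 Mw0 pw0; case: (d j) => _ [_ mx]; apply: mx => // i hi.
    by rewrite uc conc_pos // pw0.
Qed.

Lemma all_nseqS k y : inSigma N y -> all (inSigma N) (nseq k y).
Proof. by move=> h; elim: k => //= k ->; rewrite h. Qed.

Lemma allS_M B : M B -> all (inSigma N) B.
Proof.
case/M_cases => [[k _ ->]|[k ->]|[a ha ->]].
- by rewrite /TG /= Stau all_nseqS.
- by rewrite /KG /= Skappa all_cat all_nseqS //= Skappa Sgamma.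
- by rewrite /= ha.
Qed.
Lemma allS_M' B : M' B -> all (inSigma N) B.
Proof.
case/M'_cases => [[k ->]|[k ->]|->|[a ha ->]].
- by rewrite /KG /= Skappa all_cat all_nseqS //= Skappa Sgamma.
- by rewrite /KGG /= Skappa all_cat all_nseqS //= Skappa Sgamma.
- by rewrite /TGG /= Stau Sgamma.
- by rewrite /= ha.
Qed.

Lemma kblock_M B : M B -> pre B (fun _ => kappa) -> B = [:: kappa].
Proof.
case/M_cases => [[k hk ->]|[k ->]|[a ha ->]] p.
- by have [h _] := (pre_TG _ _).1 p; exfalso; apply: tk.
- by have [_ _ _ h] := (pre_KG _ _).1 p; exfalso; apply: kg.
- by rewrite -((pre_L _ _).1 p).
Qed.
Lemma kblock_M' B : M' B -> pre B (fun _ => kappa) -> B = [:: kappa].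
Proof.
case/M'_cases => [[k ->]|[k ->]|->|[a ha ->]] p.
- by have [_ _ _ h] := (pre_KG _ _).1 p; exfalso; apply: kg.
- by have [[_ _ _ h] _] := (pre_KGG _ _).1 p; exfalso; apply: kg.
- by have [h _ _] := (pre_TGG _).1 p; exfalso; apply: tk.
- by rewrite -((pre_L _ _).1 p).
Qed.

Lemma last_M B : M B -> 1 < size B -> nth 0 B (size B).-1 = gamma.
Proof.
case/M_cases => [[k hk ->]|[k ->]|[a ha ->]] h //.
- by rewrite sTG nth_TG ifF ?ifT //; lia.
- rewrite sKG nth_KG ifF ?ifF //; try lia.
  by have -> : k.+2 - k.+1 = 1 by lia.
Qed.
Lemma last_M' B : M' B -> 1 < size B -> nth 0 B (size B).-1 = gamma.
Proof.
case/M'_cases => [[k ->]|[k ->]|->|[a ha ->]] h //.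
- rewrite sKG nth_KG ifF ?ifF //; try lia.
  by have -> : k.+2 - k.+1 = 1 by lia.
- rewrite sKGG nth_KGG ifF ?ifF //; try lia.
  by have -> : k.+3 - k.+1 = 2 by lia.
Qed.


Lemma main_all :
  (forall x, inOmega N kappa x -> forall X, isDecomp M x X ->
     isDecomp M' (g N tau kappa alpha gamma x) (fun j => G0 (X j))) /\
  (forall u, inOmega N kappa u -> forall U, isDecomp M' u U ->
     isDecomp M (infconcat (fun j => G0i (U j))) (fun j => G0i (U j))) /\
  ((forall x, inOmega N kappa x -> inOmega N kappa (g N tau kappa alpha gamma x)) /\
   (forall x y, inOmega N kappa x -> inOmega N kappa y ->
      g N tau kappa alpha gamma x = g N tau kappa alpha gamma y -> x = y) /\
   (forall u, inOmega N kappa u ->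
      exists x, inOmega N kappa x /\ g N tau kappa alpha gamma x = u)).
Proof.
have gX : forall x X, isDecomp M x X -> g N tau kappa alpha gamma x = infconcat (fun j => G0 (X j)).
  move=> x X d; rewrite /g; congr infconcat; apply: functional_extensionality => j.
  by rewrite (decomp_unique (decomp_spec (ex_intro _ X d)) d j).
have exM : forall x, inOmega N kappa x -> exists X, isDecomp M x X.
  move=> x [hS [n0 hn]]; apply: (decomp_exists (K := n0.+1)).
    by move=> p; apply: M_L.
  exact: (bound_len kg last_M hn).
have exM' : forall x, inOmega N kappa x -> exists X, isDecomp M' x X.
  move=> x [hS [n0 hn]]; apply: (decomp_exists (K := n0.+1)).
    by move=> p; apply: M'_L.
  exact: (bound_len kg last_M' hn).
split; first by move=> x Ox X d; rewrite (gX x X d); exact: part1.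
split; first by move=> u _ U d; exact: part2 d.
split.
  move=> x Ox; have [X d] := exM x Ox; rewrite (gX _ _ d).
  have aX : forall j, M (X j) by move=> j; case: (d j).
  apply: omega_conc; first exact: neG aX.
    by move=> j; apply/allS_M'/g0_M.
  case: Ox => _ [n0 hn]; exists n0 => j hj.
  by rewrite (decomp_kappa M_size kblock_M d hn hj) g0_L.
split.
  move=> x y Ox Oy e; have [X dX] := exM x Ox; have [Y dY] := exM y Oy.
  have aX : forall j, M (X j) by move=> j; case: (dX j).
  have aY : forall j, M (Y j) by move=> j; case: (dY j).
  have p1 := part1 dX; have p2 := part1 dY.
  rewrite -(gX _ _ dX) e (gX _ _ dY) in p1.
  have eXY : X = Y.
    apply: functional_extensionality => j.
    have := decomp_unique p1 p2 j => /(congr1 G0i); by rewrite !g0i_g0.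
  apply: functional_extensionality => n.
  by rewrite (decomp_conc M_size dX) (decomp_conc M_size dY) eXY.
move=> u Ou; have [U d] := exM' u Ou.
have aU : forall j, M' (U j) by move=> j; case: (d j).
set X := fun j => G0i (U j).
have aX : forall j, M (X j) by move=> j; apply: g0i_M.
have dX := part2 d.
exists (infconcat X); split.
  apply: omega_conc; first exact: neZ aX.
    by move=> j; apply/allS_M.
  case: Ou => _ [n0 hn]; exists n0 => j hj.
  by rewrite /X (decomp_kappa M'_size kblock_M' d hn hj) g0i_L.
rewrite (gX _ _ dX).
have -> : (fun j => G0 (X j)) = U.
  by apply: functional_extensionality => j; rewrite /X g0_g0i.
by apply: functional_extensionality => n; rewrite (decomp_conc M'_size d n).
Qed.

End Letters.

Theorem proposition7p1 (N tau kappa alpha gamma : nat) :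
  4 <= N ->
  inSigma N tau -> inSigma N kappa -> inSigma N alpha -> inSigma N gamma ->
  tau <> kappa -> tau <> gamma -> kappa <> alpha -> kappa <> gamma -> alpha <> gamma ->
  (* (i) *)
  (forall x, inOmega N kappa x ->
     forall X, isDecomp (inCMS N tau kappa alpha gamma) x X ->
       isDecomp (inCM'S N tau kappa alpha gamma) (g N tau kappa alpha gamma x)
                (fun j => g0 tau kappa alpha gamma (X j))) /\
  (* (ii) *)
  (forall u, inOmega N kappa u ->
     forall U, isDecomp (inCM'S N tau kappa alpha gamma) u U ->
       isDecomp (inCMS N tau kappa alpha gamma)
                (infconcat (fun j => g0inv tau kappa alpha gamma (U j)))
                (fun j => g0inv tau kappa alpha gamma (U j))) /\
  (* (iii) g : Omega -> Omega is a bijection *)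
  ((forall x, inOmega N kappa x -> inOmega N kappa (g N tau kappa alpha gamma x)) /\
   (forall x y, inOmega N kappa x -> inOmega N kappa y ->
      g N tau kappa alpha gamma x = g N tau kappa alpha gamma y -> x = y) /\
   (forall u, inOmega N kappa u ->
      exists x, inOmega N kappa x /\ g N tau kappa alpha gamma x = u)).
Proof.
move=> _ Stau Skappa Salpha Sgamma tk tg ka kg ag.
exact: (main_all Stau Skappa Salpha Sgamma tk tg ka kg ag).
Qed.
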